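(* Suppose Assumptions 1, 2 and 3 hold and problem (P) is feasible (equivalently $\sum_i(\underline{x}_i-\phi_i(\underline{x}_i))\le\sum_i d_i\le\sum_i(\bar{x}_i-\phi_i(\bar{x}_i))$). Consider the distributed dynamics, for $i=1,\dots,N$, $$\dot{\lambda}_i=d_i-\hat{x}_i(\lambda_i)+\phi_i\big(\hat{x}_i(\lambda_i)\big)+k\sum_{j\in\mathcal{N}_i}(\lambda_j-\lambda_i),\qquad x_i(t)=\hat{x}_i(\lambda_i(t)),$$ with coupling gain $k>0$. Then for every $k>0$ and every initial condition $(\lambda_1(0),\dots,\lambda_N(0))\in\mathbb{R}^N$, the solution $(\lambda_1(t),\dots,\lambda_N(t))$ converges to a point as $t\to\infty$, and $$\lim_{t\to\infty}\sum_{i=1}^N\Big(x_i(t)-\phi_i\big(x_i(t)\big)\Big)=\sum_{i=1}^N d_i.$$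
   Context: For $i=1,\dots,N$: $d_i\in\mathbb{R}$, $\mathcal{X}_i=[\underline{x}_i,\bar{x}_i]$ a nonempty closed interval, $f_i,\phi_i:\mathbb{R}\to\mathbb{R}$. Problem (P): minimize $\sum_{i=1}^N f_i(x_i)$ subject to $\sum_{i=1}^N d_i=\sum_{i=1}^N(x_i-\phi_i(x_i))$ and $x_i\in\mathcal{X}_i$ for all $i$. Assumption 1: for each $i$, $f_i$ and $\phi_i$ are continuously differentiable, $f_i$ is strictly convex on $\mathcal{X}_i$, $\phi_i$ is convex on $\mathcal{X}_i$, and $\phi_i'(x_i)<1$ for all $x_i\in\mathcal{X}_i$. Assumption 2: $f_i'(x_i)>0$ for all $x_i\in\mathcal{X}_i$ and all $i$. Assumption 3: the communication graph $\mathcal{G}=(\{1,\dots,N\},\mathcal{E})$ is undirected and connected; $\mathcal{N}_i=\{j:(j,i)\in\mathcal{E}\}$. Let $v_i(x_i)=f_i'(x_i)(1-\phi_i'(x_i))^{-1}$ on $\mathcal{X}_i$ (strictly increasing). Define for $\lambda\in\mathbb{R}$: $\hat{x}_i(\lambda)=\underline{x}_i$ if $\lambda\le v_i(\underline{x}_i)$; $\hat{x}_i(\lambda)=v_i^{-1}(\lambda)$ if $v_i(\underline{x}_i)<\lambda<v_i(\bar{x}_i)$; $\hat{x}_i(\lambda)=\bar{x}_i$ if $\lambda\ge v_i(\bar{x}_i)$. *)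

(* Defs.v *)
From Stdlib Require Export Reals Lra Relations ClassicalEpsilon.
Open Scope R_scope.

(* sum_{i=0}^{n-1} g i  (indices 0..N-1 stand for 1..N) *)
Fixpoint sumN (n : nat) (g : nat -> R) : R :=
  match n with O => 0 | S m => sumN m g + g m end.

Definition convex_on (h : R -> R) (a b : R) : Prop :=
  forall x y t, a <= x <= b -> a <= y <= b -> 0 <= t <= 1 ->
    h (t * x + (1 - t) * y) <= t * h x + (1 - t) * h y.

Definition strictly_convex_on (h : R -> R) (a b : R) : Prop :=
  forall x y t, a <= x <= b -> a <= y <= b -> x <> y -> 0 < t < 1 ->
    h (t * x + (1 - t) * y) < t * h x + (1 - t) * h y.

(* v_i(x) = f_i'(x) (1 - phi_i'(x))^{-1}, given the derivatives fd, phid *)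
Definition vfun (fd phid : R -> R) (x : R) : R := fd x / (1 - phid x).

(* \hat x_i(lambda), with v_i^{-1} realized by Hilbert choice on [lo,hi] *)
Definition xhat (fd phid : R -> R) (lo hi lam : R) : R :=
  if Rle_dec lam (vfun fd phid lo) then lo
  else if Rle_dec (vfun fd phid hi) lam then hi
  else epsilon (inhabits 0) (fun x => lo <= x <= hi /\ vfun fd phid x = lam).

Definition cv_infty_fun (g : R -> R) (l : R) : Prop :=
  forall eps, 0 < eps -> exists T, forall t, T <= t -> Rabs (g t - l) < eps.

(* Main.v *)
Require Import Defs.
From Stdlib Require Import Reals Lra Lia Relations Classical ClassicalEpsilon.
Open Scope R_scope.


Lemma sumN_ext n f g : (forall i, (i < n)%nat -> f i = g i) -> sumN n f = sumN n g.
Proof. induction n; simpl; intros H; auto. rewrite IHn by (intros; apply H; lia). rewrite H by lia; auto. Qed.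
Lemma sumN_plus n f g : sumN n (fun i => f i + g i) = sumN n f + sumN n g.
Proof. induction n; simpl; [lra|rewrite IHn; lra]. Qed.
Lemma sumN_minus n f g : sumN n (fun i => f i - g i) = sumN n f - sumN n g.
Proof. induction n; simpl; [lra|rewrite IHn; lra]. Qed.
Lemma sumN_scal n c f : sumN n (fun i => c * f i) = c * sumN n f.
Proof. induction n; simpl; [lra|rewrite IHn; lra]. Qed.
Lemma sumN_const n c : sumN n (fun _ => c) = INR n * c.
Proof. induction n; simpl sumN; [simpl; lra|rewrite IHn, S_INR; lra]. Qed.
Lemma sumN_zero n : sumN n (fun _ => 0) = 0.
Proof. induction n; simpl; [lra|rewrite IHn; lra]. Qed.
Lemma sumN_le n f g : (forall i, (i < n)%nat -> f i <= g i) -> sumN n f <= sumN n g.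
Proof. induction n; simpl; intros H; [lra|]. pose proof (IHn (fun i Hi => H i ltac:(lia))). pose proof (H n ltac:(lia)); lra. Qed.
Lemma sumN_nonneg n f : (forall i, (i < n)%nat -> 0 <= f i) -> 0 <= sumN n f.
Proof. intros H. rewrite <- (sumN_zero n). apply sumN_le; auto. Qed.
Lemma sumN_term_le n f i : (forall j, (j < n)%nat -> 0 <= f j) -> (i < n)%nat -> f i <= sumN n f.
Proof. induction n; simpl; intros H Hi; [lia|]. destruct (Nat.eq_dec i n).
 - subst. pose proof (sumN_nonneg n f (fun j Hj => H j ltac:(lia))); lra.
 - pose proof (IHn (fun j Hj => H j ltac:(lia)) ltac:(lia)). pose proof (H n ltac:(lia)); lra. Qed.
Lemma sumN_swap n m (f : nat -> nat -> R) :
  sumN n (fun i => sumN m (fun j => f i j)) = sumN m (fun j => sumN n (fun i => f i j)).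
Proof. induction n; simpl. - rewrite sumN_zero; auto. - rewrite IHn, <- sumN_plus; auto. Qed.
Lemma sumN_abs n f : Rabs (sumN n f) <= sumN n (fun i => Rabs (f i)).
Proof. induction n; simpl. rewrite Rabs_R0; lra. eapply Rle_trans. apply Rabs_triang. lra. Qed.

Lemma sumN_antisym n (f : nat -> nat -> R) :
  (forall i j, (i < n)%nat -> (j < n)%nat -> f i j = - f j i) ->
  sumN n (fun i => sumN n (fun j => f i j)) = 0.
Proof. intros H. assert (E: sumN n (fun i => sumN n (fun j => f i j)) = - sumN n (fun i => sumN n (fun j => f i j))).
 { rewrite sumN_swap at 1.
   replace (- sumN n (fun i => sumN n (fun j => f i j))) with (-1 * sumN n (fun i => sumN n (fun j => f i j))) by ring.
   rewrite <- sumN_scal. apply sumN_ext; intros j Hj. rewrite <- sumN_scal. apply sumN_ext; intros i Hi. rewrite H by auto. ring. }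
 lra. Qed.


Lemma dlim_cont f f' x : derivable_pt_lim f x f' -> continuity_pt f x.
Proof. intros H. apply derivable_continuous_pt. exists f'. exact H. Qed.

Lemma conv_slope_left (h h' : R -> R) a b x y :
  (forall u w t, a <= u <= b -> a <= w <= b -> u <> w -> 0 < t < 1 ->
     h (t * u + (1 - t) * w) <= t * h u + (1 - t) * h w) ->
  derivable_pt_lim h x (h' x) -> a <= x -> x < y -> y <= b ->
  h' x <= (h y - h x) / (y - x).
Proof.
  intros Hc Hd Hax Hxy Hyb. set (s := (h y - h x) / (y - x)).
  destruct (Rle_or_lt (h' x) s) as [|Hlt]; auto. exfalso.
  destruct (Hd (h' x - s) ltac:(lra)) as [[del Hdel] Hq]. simpl in Hq.
  set (e := Rmin (del / 2) (y - x)).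
  assert (He0 : 0 < e) by (unfold e; apply Rmin_glb_lt; lra).
  assert (Hey : e <= y - x) by apply Rmin_r.
  assert (Hed : e < del) by (unfold e; pose proof (Rmin_l (del/2) (y-x)); lra).
  specialize (Hq e ltac:(lra) ltac:(rewrite Rabs_pos_eq; lra)).
  assert (Hq2 : (h (x + e) - h x) / e <= s).
  { destruct (Req_dec e (y - x)) as [E|E].
    - replace (x + e) with y by lra. rewrite E. unfold s. lra.
    - set (t := e / (y - x)).
      assert (Ht : 0 < t < 1).
      { unfold t; split. apply Rdiv_lt_0_compat; lra.
        apply (Rmult_lt_reg_r (y - x)); [lra|]. unfold Rdiv. rewrite Rmult_assoc, Rinv_l; lra. }
      assert (Hte : e = t * (y - x)) by (unfold t; field; lra).
      pose proof (Hc y x t ltac:(lra) ltac:(lra) ltac:(lra) Ht) as Hcv.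
      replace (t * y + (1 - t) * x) with (x + e) in Hcv by (rewrite Hte; ring).
      apply (Rmult_le_reg_r e); [lra|].
      replace ((h (x + e) - h x) / e * e) with (h (x + e) - h x) by (field; lra).
      replace (s * e) with (t * (h y - h x)) by (unfold s; rewrite Hte; field; lra).
      lra. }
  apply Rabs_def2 in Hq. lra.
Qed.

Lemma conv_slope_right (h h' : R -> R) a b x y :
  (forall u w t, a <= u <= b -> a <= w <= b -> u <> w -> 0 < t < 1 ->
     h (t * u + (1 - t) * w) <= t * h u + (1 - t) * h w) ->
  derivable_pt_lim h y (h' y) -> a <= x -> x < y -> y <= b ->
  (h y - h x) / (y - x) <= h' y.
Proof.
  intros Hc Hd Hax Hxy Hyb. set (s := (h y - h x) / (y - x)).
  destruct (Rle_or_lt s (h' y)) as [|Hlt]; auto. exfalso.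
  destruct (Hd (s - h' y) ltac:(lra)) as [[del Hdel] Hq]. simpl in Hq.
  set (e := Rmin (del / 2) (y - x)).
  assert (He0 : 0 < e) by (unfold e; apply Rmin_glb_lt; lra).
  assert (Hey : e <= y - x) by apply Rmin_r.
  assert (Hed : e < del) by (unfold e; pose proof (Rmin_l (del/2) (y-x)); lra).
  specialize (Hq (- e) ltac:(lra) ltac:(rewrite Rabs_Ropp, Rabs_pos_eq; lra)).
  assert (Hq2 : s <= (h y - h (y - e)) / e).
  { destruct (Req_dec e (y - x)) as [E|E].
    - replace (y - e) with x by lra. rewrite E. unfold s. lra.
    - set (t := e / (y - x)).
      assert (Ht : 0 < t < 1).
      { unfold t; split. apply Rdiv_lt_0_compat; lra.
        apply (Rmult_lt_reg_r (y - x)); [lra|]. unfold Rdiv. rewrite Rmult_assoc, Rinv_l; lra. }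
      assert (Hte : e = t * (y - x)) by (unfold t; field; lra).
      pose proof (Hc x y t ltac:(lra) ltac:(lra) ltac:(lra) Ht) as Hcv.
      replace (t * x + (1 - t) * y) with (y - e) in Hcv by (rewrite Hte; ring).
      apply (Rmult_le_reg_r e); [lra|].
      replace ((h y - h (y - e)) / e * e) with (h y - h (y - e)) by (field; lra).
      replace (s * e) with (t * (h y - h x)) by (unfold s; rewrite Hte; field; lra).
      lra. }
  replace (y + - e) with (y - e) in Hq by ring.
  replace ((h (y - e) - h y) / - e) with ((h y - h (y - e)) / e) in Hq by (field; lra).
  apply Rabs_def2 in Hq. lra.
Qed.

Lemma conv_deriv_mono (h h' : R -> R) a b x y :
  convex_on h a b -> (forall z, derivable_pt_lim h z (h' z)) ->
  a <= x -> x <= y -> y <= b -> h' x <= h' y.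
Proof.
  intros Hc Hd Hax Hxy Hyb. destruct (Req_dec x y) as [->|Hne]; [lra|].
  assert (Hc' : forall u w t, a <= u <= b -> a <= w <= b -> u <> w -> 0 < t < 1 ->
     h (t * u + (1 - t) * w) <= t * h u + (1 - t) * h w) by (intros; apply Hc; auto; lra).
  pose proof (conv_slope_left h h' a b x y Hc' (Hd x) Hax ltac:(lra) Hyb).
  pose proof (conv_slope_right h h' a b x y Hc' (Hd y) Hax ltac:(lra) Hyb). lra.
Qed.

Lemma sconv_deriv_mono (h h' : R -> R) a b x y :
  strictly_convex_on h a b -> (forall z, derivable_pt_lim h z (h' z)) ->
  a <= x -> x < y -> y <= b -> h' x < h' y.
Proof.
  intros Hc Hd Hax Hxy Hyb.
  assert (Hc' : forall u w t, a <= u <= b -> a <= w <= b -> u <> w -> 0 < t < 1 ->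
     h (t * u + (1 - t) * w) <= t * h u + (1 - t) * h w) by (intros; apply Rlt_le, Hc; auto).
  set (m := (x + y) / 2).
  pose proof (conv_slope_left h h' a b x m Hc' (Hd x) Hax ltac:(unfold m; lra) ltac:(unfold m; lra)).
  pose proof (conv_slope_right h h' a b m y Hc' (Hd y) ltac:(unfold m; lra) ltac:(unfold m; lra) Hyb).
  pose proof (Hc x y (1/2) ltac:(lra) ltac:(lra) ltac:(lra) ltac:(lra)) as Hm.
  replace (1 / 2 * x + (1 - 1 / 2) * y) with m in Hm by (unfold m; field).
  assert (E1 : (h m - h x) / (m - x) = 2 * (h m - h x) / (y - x)) by (unfold m; field; lra).
  assert (E2 : (h y - h m) / (y - m) = 2 * (h y - h m) / (y - x)) by (unfold m; field; lra).
  rewrite E1 in *. rewrite E2 in *.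
  assert (2 * (h m - h x) / (y - x) < 2 * (h y - h m) / (y - x)).
  { unfold Rdiv. apply Rmult_lt_compat_r. apply Rinv_0_lt_compat; lra. lra. }
  lra.
Qed.


Definition good (f phi fd phid : R -> R) (lo hi : R) : Prop :=
  lo <= hi /\ (forall x, derivable_pt_lim f x (fd x)) /\ continuity fd /\
  (forall x, derivable_pt_lim phi x (phid x)) /\ continuity phid /\
  strictly_convex_on f lo hi /\ convex_on phi lo hi /\
  (forall x, lo <= x <= hi -> phid x < 1) /\ (forall x, lo <= x <= hi -> 0 < fd x).

Lemma v_strict f phi fd phid lo hi x y : good f phi fd phid lo hi ->
  lo <= x -> x < y -> y <= hi -> vfun fd phid x < vfun fd phid y.
Proof.
  intros (Hlh & Hf & Hfc & Hp & Hpc & Hsc & Hcv & Hp1 & Hfp) H1 H2 H3.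
  pose proof (sconv_deriv_mono f fd lo hi x y Hsc Hf H1 H2 H3).
  pose proof (conv_deriv_mono phi phid lo hi x y Hcv Hp H1 ltac:(lra) H3).
  pose proof (Hp1 x ltac:(lra)). pose proof (Hp1 y ltac:(lra)).
  pose proof (Hfp x ltac:(lra)). unfold vfun.
  apply Rle_lt_trans with (fd x / (1 - phid y)).
  - unfold Rdiv. apply Rmult_le_compat_l; [lra|]. apply Rinv_le_contravar; lra.
  - unfold Rdiv. apply Rmult_lt_compat_r; [apply Rinv_0_lt_compat; lra|lra].
Qed.

Lemma v_le_inv f phi fd phid lo hi x y : good f phi fd phid lo hi ->
  lo <= x <= hi -> lo <= y <= hi -> vfun fd phid x <= vfun fd phid y -> x <= y.
Proof.
  intros G Hx Hy Hv. destruct (Rle_or_lt x y) as [|Hlt]; auto.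
  pose proof (v_strict f phi fd phid lo hi y x G ltac:(lra) Hlt ltac:(lra)). lra.
Qed.

Lemma xhat_props f phi fd phid lo hi lam : good f phi fd phid lo hi ->
  let xh := xhat fd phid lo hi lam in
  (lo <= xh <= hi) /\
  (forall y, lo <= y <= hi -> vfun fd phid y <= lam -> y <= xh) /\
  (forall y, lo <= y <= hi -> lam <= vfun fd phid y -> xh <= y).
Proof.
  intros G xh. pose proof G as (Hlh & Hf & Hfc & Hp & Hpc & Hsc & Hcv & Hp1 & Hfp).
  unfold xh, xhat. destruct (Rle_dec lam (vfun fd phid lo)) as [H1|H1].
  { split; [lra|split].
    - intros y Hy Hv. apply (v_le_inv f phi fd phid lo hi); auto; lra.
    - intros; lra. }
  destruct (Rle_dec (vfun fd phid hi) lam) as [H2|H2].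
  { split; [lra|split].
    - intros; lra.
    - intros y Hy Hv. apply (v_le_inv f phi fd phid lo hi); auto; lra. }
  apply Rnot_le_lt in H1. apply Rnot_le_lt in H2.
  assert (Hlt : lo < hi).
  { destruct Hlh as [|E]; auto. subst. lra. }
  set (w := fun x => fd x - lam * (1 - phid x)).
  assert (Hwc : continuity w).
  { unfold w. apply continuity_minus; auto. apply continuity_mult. apply continuity_const. intros a b; auto.
    apply continuity_minus; auto. apply continuity_const. intros a b; auto. }
  assert (Hwv : forall x, lo <= x <= hi -> w x = (1 - phid x) * (vfun fd phid x - lam)).
  { intros x Hx. pose proof (Hp1 x Hx). unfold w, vfun. field. lra. }
  destruct (IVT w lo hi Hwc Hlt) as [z [Hz Hwz]].
  { rewrite Hwv by lra. pose proof (Hp1 lo ltac:(lra)). apply Rmult_pos_neg; lra. }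
  { rewrite Hwv by lra. pose proof (Hp1 hi ltac:(lra)). apply Rmult_lt_0_compat; lra. }
  assert (Hex : exists x, lo <= x <= hi /\ vfun fd phid x = lam).
  { exists z. split; auto. rewrite Hwv in Hwz by auto. pose proof (Hp1 z Hz).
    apply Rmult_integral in Hwz. destruct Hwz; lra. }
  pose proof (epsilon_spec (inhabits 0) _ Hex) as [He1 He2].
  set (e := epsilon (inhabits 0) (fun x => lo <= x <= hi /\ vfun fd phid x = lam)) in *.
  split; auto. split.
  - intros y Hy Hv. apply (v_le_inv f phi fd phid lo hi); auto; lra.
  - intros y Hy Hv. apply (v_le_inv f phi fd phid lo hi); auto; lra.
Qed.

Lemma xhat_cont f phi fd phid lo hi : good f phi fd phid lo hi ->
  continuity (xhat fd phid lo hi).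
Proof.
  intros G l0 eps Heps.
  pose proof (xhat_props f phi fd phid lo hi l0 G) as (Hi0 & P10 & P20).
  set (x0 := xhat fd phid lo hi l0) in *.
  assert (Hup : exists d1, 0 < d1 /\ forall l, l < l0 + d1 -> xhat fd phid lo hi l < x0 + eps).
  { destruct (Rle_or_lt hi (x0 + eps / 2)) as [Hh|Hh].
    - exists 1. split; [lra|]. intros l _. destruct (xhat_props f phi fd phid lo hi l G) as [Hi _]. lra.
    - set (y := x0 + eps / 2).
      assert (Hv : l0 < vfun fd phid y).
      { destruct (Rle_or_lt (vfun fd phid y) l0) as [Hc|]; auto.
        pose proof (P10 y ltac:(unfold y; lra) Hc). unfold y in *. lra. }
      exists (vfun fd phid y - l0). split; [lra|]. intros l Hl.
      destruct (xhat_props f phi fd phid lo hi l G) as (Hi & P1 & P2).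
      pose proof (P2 y ltac:(unfold y; lra) ltac:(lra)). unfold y in *. lra. }
  assert (Hdn : exists d2, 0 < d2 /\ forall l, l0 - d2 < l -> x0 - eps < xhat fd phid lo hi l).
  { destruct (Rle_or_lt (x0 - eps / 2) lo) as [Hh|Hh].
    - exists 1. split; [lra|]. intros l _. destruct (xhat_props f phi fd phid lo hi l G) as [Hi _]. lra.
    - set (y := x0 - eps / 2).
      assert (Hv : vfun fd phid y < l0).
      { destruct (Rle_or_lt l0 (vfun fd phid y)) as [Hc|]; auto.
        pose proof (P20 y ltac:(unfold y; lra) Hc). unfold y in *. lra. }
      exists (l0 - vfun fd phid y). split; [lra|]. intros l Hl.
      destruct (xhat_props f phi fd phid lo hi l G) as (Hi & P1 & P2).
      pose proof (P1 y ltac:(unfold y; lra) ltac:(lra)). unfold y in *. lra. }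
  destruct Hup as [d1 [Hd1 Hu]]. destruct Hdn as [d2 [Hd2 Hd]].
  exists (Rmin d1 d2). split. apply Rmin_glb_lt; auto.
  intros l [_ Hl]. simpl in Hl. unfold R_dist in *.
  pose proof (Rmin_l d1 d2). pose proof (Rmin_r d1 d2).
  apply Rabs_def2 in Hl. destruct Hl.
  pose proof (Hu l ltac:(lra)). pose proof (Hd l ltac:(lra)).
  unfold R_dist. apply Rabs_def1; fold x0; lra.
Qed.

Lemma xhat_argmax f phi fd phid lo hi lam y : good f phi fd phid lo hi ->
  lo <= y <= hi ->
  lam * (y - phi y) - f y <=
  lam * (xhat fd phid lo hi lam - phi (xhat fd phid lo hi lam)) - f (xhat fd phid lo hi lam).
Proof.
  intros G Hy. pose proof G as (Hlh & Hf & Hfc & Hp & Hpc & Hsc & Hcv & Hp1 & Hfp).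
  pose proof (xhat_props f phi fd phid lo hi lam G) as (Hi & P1 & P2).
  set (xh := xhat fd phid lo hi lam) in *.
  set (psi := fun z => lam * (z - phi z) - f z).
  set (psi' := fun z => lam * (1 - phid z) - fd z).
  assert (Hd : forall z, derivable_pt_lim psi z (psi' z)).
  { intros z. change psi with (minus_fct (mult_fct (fct_cte lam) (minus_fct id phi)) f).
    pose proof (derivable_pt_lim_mult (fct_cte lam) (minus_fct id phi) z 0 (1 - phid z)
      (derivable_pt_lim_const lam z) (derivable_pt_lim_minus id phi z 1 (phid z) (derivable_pt_lim_id z) (Hp z))) as H1.
    pose proof (derivable_pt_lim_minus _ f z _ _ H1 (Hf z)) as H2.
    unfold psi'. replace (lam * (1 - phid z) - fd z) with (0 * minus_fct id phi z + fct_cte lam z * (1 - phid z) - fd z).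
    exact H2. unfold fct_cte; ring. }
  assert (Hsg : forall z, lo <= z <= hi -> psi' z = (1 - phid z) * (lam - vfun fd phid z)).
  { intros z Hz. pose proof (Hp1 z Hz). unfold psi', vfun. field. lra. }
  change (psi y <= psi xh).
  destruct (Rtotal_order y xh) as [Hlt|[E|Hgt]].
  - destruct (MVT_cor2 psi psi' y xh Hlt (fun c _ => Hd c)) as [c [Hc1 Hc2]].
    assert (vfun fd phid c < lam).
    { destruct (Rle_or_lt lam (vfun fd phid c)) as [Hc|]; auto. pose proof (P2 c ltac:(lra) Hc). lra. }
    rewrite Hsg in Hc1 by lra. pose proof (Hp1 c ltac:(lra)).
    assert (0 < (1 - phid c) * (lam - vfun fd phid c) * (xh - y)) by (repeat apply Rmult_lt_0_compat; lra).
    lra.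
  - subst; lra.
  - destruct (MVT_cor2 psi psi' xh y Hgt (fun c _ => Hd c)) as [c [Hc1 Hc2]].
    assert (lam < vfun fd phid c).
    { destruct (Rle_or_lt (vfun fd phid c) lam) as [Hc|]; auto. pose proof (P1 c ltac:(lra) Hc). lra. }
    rewrite Hsg in Hc1 by lra. pose proof (Hp1 c ltac:(lra)).
    assert (0 < (1 - phid c) * (vfun fd phid c - lam) * (y - xh)) by (repeat apply Rmult_lt_0_compat; lra).
    lra.
Qed.

Definition gf (phi fd phid : R -> R) lo hi lam :=
  xhat fd phid lo hi lam - phi (xhat fd phid lo hi lam).
Definition Gf (f phi fd phid : R -> R) lo hi lam :=
  lam * gf phi fd phid lo hi lam - f (xhat fd phid lo hi lam).

Lemma G_sub f phi fd phid lo hi l m : good f phi fd phid lo hi ->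
  Gf f phi fd phid lo hi l + (m - l) * gf phi fd phid lo hi l <= Gf f phi fd phid lo hi m.
Proof.
  intros G. pose proof (xhat_props f phi fd phid lo hi l G) as (Hi & _).
  pose proof (xhat_argmax f phi fd phid lo hi m _ G Hi).
  unfold Gf, gf in *. lra.
Qed.

Lemma g_mono f phi fd phid lo hi l m : good f phi fd phid lo hi -> l <= m ->
  gf phi fd phid lo hi l <= gf phi fd phid lo hi m.
Proof.
  intros G Hlm. pose proof (G_sub f phi fd phid lo hi l m G). pose proof (G_sub f phi fd phid lo hi m l G).
  destruct Hlm as [Hlt|E]; [|subst; lra]. nra.
Qed.

Lemma g_cont f phi fd phid lo hi : good f phi fd phid lo hi ->
  continuity (gf phi fd phid lo hi).
Proof.
  intros G. pose proof G as (Hlh & Hf & Hfc & Hp & Hpc & _).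
  pose proof (xhat_cont f phi fd phid lo hi G) as Hc.
  intros x. unfold gf. apply continuity_pt_minus; auto.
  apply (continuity_pt_comp (xhat fd phid lo hi) phi); auto. apply (dlim_cont _ _ _ (Hp _)).
Qed.

Lemma g_low phi fd phid lo hi l : l <= vfun fd phid lo -> gf phi fd phid lo hi l = lo - phi lo.
Proof. intros H. unfold gf, xhat. destruct (Rle_dec l (vfun fd phid lo)); [auto|contradiction]. Qed.

Lemma g_high f phi fd phid lo hi l : good f phi fd phid lo hi ->
  vfun fd phid hi <= l -> gf phi fd phid lo hi l = hi - phi hi.
Proof.
  intros G H. pose proof G as [Hlh _]. unfold gf, xhat.
  destruct (Rle_dec l (vfun fd phid lo)) as [H1|H1].
  - destruct Hlh as [Hlt|E]; [|subst; auto].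
    pose proof (v_strict f phi fd phid lo hi lo hi G ltac:(lra) Hlt ltac:(lra)). lra.
  - destruct (Rle_dec (vfun fd phid hi) l); [auto|contradiction].
Qed.


Lemma Rdiv_le_0_compat a b : 0 <= a -> 0 < b -> 0 <= a / b.
Proof. intros. unfold Rdiv. apply Rmult_le_pos; auto. left; apply Rinv_0_lt_compat; auto. Qed.

Definition Lap (w : nat -> nat -> R) n (p : nat -> R) i := sumN n (fun j => w i j * (p i - p j)).
Definition conn (w : nat -> nat -> R) n := forall S : nat -> Prop,
  (exists a, (a < n)%nat /\ S a) -> (exists b, (b < n)%nat /\ ~ S b) ->
  exists i j, (i < n)%nat /\ (j < n)%nat /\ S i /\ ~ S j /\ 0 < w i j.

Lemma Lap_split w m c (q : nat -> R) (p : nat -> R) i :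
  sumN m (fun j => (w i j + c * q j) * (p i - p j)) =
  Lap w m p i + c * (p i * sumN m q - sumN m (fun j => q j * p j)).
Proof.
  unfold Lap. rewrite <- sumN_scal. rewrite <- sumN_minus. rewrite <- sumN_scal. rewrite <- sumN_plus.
  apply sumN_ext; intros; ring.
Qed.

Lemma lap_solve n : forall w, (forall i j, (i < n)%nat -> (j < n)%nat -> w i j = w j i) ->
  (forall i j, (i < n)%nat -> (j < n)%nat -> 0 <= w i j) -> conn w n ->
  forall e, sumN n e = 0 -> exists p, forall i, (i < n)%nat -> Lap w n p i = e i.
Proof.
  induction n as [|m IH]; intros w Hs Hn Hc e He.
  { exists (fun _ => 0). intros; lia. }
  destruct (Nat.eq_dec m 0) as [->|Hm].
  { exists (fun _ => 0). intros i Hi. assert (i = 0%nat) by lia. subst.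
    simpl in He. unfold Lap. simpl. lra. }
  set (D := sumN m (fun j => w j m)).
  assert (HD : 0 < D).
  { destruct (Hc (fun x => x = m)) as (i & j & Hi & Hj & Si & Sj & Hw).
    - exists m; split; auto.
    - exists 0%nat; split; [lia|]. lia.
    - subst i. assert (Hj' : (j < m)%nat) by lia. unfold D.
      eapply Rlt_le_trans; [|apply (sumN_term_le m (fun j => w j m) j); auto].
      rewrite Hs by lia. auto. }
  set (w' := fun i j => w i j + w i m * w j m / D).
  set (e' := fun i => e i + w i m * e m / D).
  assert (Hs' : forall i j, (i < m)%nat -> (j < m)%nat -> w' i j = w' j i).
  { intros. unfold w'. rewrite Hs by lia. lra. }
  assert (Hn' : forall i j, (i < m)%nat -> (j < m)%nat -> 0 <= w' i j).
  { intros. unfold w'. pose proof (Hn i j ltac:(lia) ltac:(lia)).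
    pose proof (Hn i m ltac:(lia) ltac:(lia)). pose proof (Hn j m ltac:(lia) ltac:(lia)).
    assert (0 <= w i m * w j m / D) by (apply Rdiv_le_0_compat; nra). lra. }
  assert (Hc' : conn w' m).
  { intros S [a [Ha Sa]] [b [Hb Sb]].
    destruct (Hc (fun x => S x \/ x = m)) as (i & j & Hi & Hj & Si & Sj & Hw).
    { exists a; split; auto. }
    { exists b; split; [lia|]. intros [H|H]; auto. lia. }
    assert (Hjm : (j < m)%nat) by (destruct (Nat.eq_dec j m); [exfalso; auto|lia]).
    assert (Sj' : ~ S j) by auto.
    destruct (Nat.eq_dec i m) as [Eim|Nim].
    2:{ exists i, j. destruct Si as [Si|Si]; [|contradiction]. repeat split; auto; try lia.
        unfold w'. pose proof (Hn i m ltac:(lia) ltac:(lia)). pose proof (Hn j m ltac:(lia) ltac:(lia)).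
        assert (0 <= w i m * w j m / D) by (apply Rdiv_le_0_compat; nra). lra. }
    subst i.
    destruct (Hc (fun x => S x /\ x <> m)) as (i' & j' & Hi' & Hj' & [Si' Ni'] & Sj'' & Hw').
    { exists a; split; auto. split; auto. lia. }
    { exists m; split; [lia|]. intros [_ H]; auto. }
    destruct (Nat.eq_dec j' m) as [Ejm|Njm].
    - subst j'. exists i', j. repeat split; auto; try lia.
      unfold w'. pose proof (Hn i' j ltac:(lia) ltac:(lia)).
      rewrite (Hs j m) in * by lia.
      assert (0 < w i' m * w m j / D) by (apply Rdiv_lt_0_compat; auto; nra). lra.
    - exists i', j'. assert (~ S j') by (intros H; apply Sj''; split; auto).
      repeat split; auto; try lia.
      unfold w'. pose proof (Hn i' m ltac:(lia) ltac:(lia)). pose proof (Hn j' m ltac:(lia) ltac:(lia)).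
      assert (0 <= w i' m * w j' m / D) by (apply Rdiv_le_0_compat; nra). lra. }
  assert (He' : sumN m e' = 0).
  { unfold e'. rewrite sumN_plus.
    replace (sumN m (fun i => w i m * e m / D)) with ((e m / D) * sumN m (fun i => w i m)).
    2:{ rewrite <- sumN_scal. apply sumN_ext; intros; field; lra. }
    fold D. simpl in He. field_simplify; [|lra]. lra. }
  destruct (IH w' Hs' Hn' Hc' e' He') as [p' Hp'].
  set (pm := (e m + sumN m (fun j => w j m * p' j)) / D).
  exists (fun i => if Nat.eq_dec i m then pm else p' i).
  intros i Hi. unfold Lap. simpl.
  destruct (Nat.eq_dec m m) as [_|]; [|congruence].
  destruct (Nat.eq_dec i m) as [->|Nim].
  - replace (w m m * (pm - pm)) with 0 by ring.
    rewrite (sumN_ext m _ (fun j => w j m * pm - w j m * p' j)).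
    2:{ intros j Hj. destruct (Nat.eq_dec j m); [lia|]. rewrite Hs by lia. ring. }
    rewrite sumN_minus.
    replace (sumN m (fun j => w j m * pm)) with (pm * D).
    2:{ unfold D. rewrite <- sumN_scal. apply sumN_ext; intros; ring. }
    unfold pm. field_simplify; [|lra]. lra.
  - assert (Him : (i < m)%nat) by lia.
    pose proof (Hp' i Him) as Hq. unfold Lap, w' in Hq.
    rewrite (sumN_ext m (fun j => (w i j + w i m * w j m / D) * (p' i - p' j))
                        (fun j => (w i j + (w i m / D) * w j m) * (p' i - p' j))) in Hq
      by (intros; unfold Rdiv; ring).
    rewrite Lap_split in Hq. fold D in Hq. unfold Lap in Hq.
    destruct (Nat.eq_dec i m) as [|_]; [lia|].
    rewrite (sumN_ext m _ (fun j => w i j * (p' i - p' j))).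
    2:{ intros j Hj. destruct (Nat.eq_dec j m); [lia|]. auto. }
    assert (Hpm : sumN m (fun j => w j m * p' j) = pm * D - e m) by (unfold pm; field; lra).
    rewrite Hpm in Hq. unfold e' in Hq.
    assert (E2 : w i m / D * (p' i * D - (pm * D - e m)) = w i m * (p' i - pm) + w i m * e m / D)
      by (field; lra).
    rewrite E2 in Hq. lra.
Qed.


Lemma Rabs_def2b x B : Rabs x <= B -> -B <= x <= B.
Proof. unfold Rabs; destruct Rcase_abs; lra. Qed.

Lemma cv_const c : Un_cv (fun _ => c) c.
Proof. intros e He. exists 0%nat. intros. unfold R_dist. rewrite Rminus_diag, Rabs_R0. auto. Qed.
Lemma cv_S u l : Un_cv u l -> Un_cv (fun n => u (S n)) l.
Proof. intros H e He. destruct (H e He) as [M HM]. exists M. intros n Hn. apply HM. lia. Qed.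
Lemma cv_sumN n (u : nat -> nat -> R) (l : nat -> R) :
  (forall j, (j < n)%nat -> Un_cv (fun k => u k j) (l j)) ->
  Un_cv (fun k => sumN n (fun j => u k j)) (sumN n l).
Proof. induction n; intros H; simpl. apply cv_const.
  apply CV_plus. apply IHn; intros; apply H; lia. apply H; lia. Qed.

Lemma Lap_shift w n p c i : Lap w n (fun j => c + p j) i = Lap w n p i.
Proof. unfold Lap. apply sumN_ext; intros; ring. Qed.
Lemma Lap_expand w n p i : Lap w n p i = p i * sumN n (w i) - sumN n (fun j => w i j * p j).
Proof. unfold Lap. rewrite <- sumN_scal, <- sumN_minus. apply sumN_ext; intros; ring. Qed.

Lemma bound_fin n (u : nat -> R) : exists B, 0 <= B /\ forall i, (i < n)%nat -> Rabs (u i) <= B.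
Proof.
  exists (sumN n (fun i => Rabs (u i))). split. apply sumN_nonneg; intros; apply Rabs_pos.
  intros i Hi. apply (sumN_term_le n (fun i => Rabs (u i)) i); auto. intros; apply Rabs_pos.
Qed.

Lemma equilibrium_exists N (d glo ghi vlo vhi : nat -> R) (g : nat -> R -> R) (w : nat -> nat -> R) k :
  (forall i, (i < N)%nat -> continuity (g i)) ->
  (forall i, (i < N)%nat -> forall x y, x <= y -> g i x <= g i y) ->
  (forall i, (i < N)%nat -> forall x, x <= vlo i -> g i x = glo i) ->
  (forall i, (i < N)%nat -> forall x, vhi i <= x -> g i x = ghi i) ->
  (forall i j, (i < N)%nat -> (j < N)%nat -> w i j = w j i) ->
  (forall i j, (i < N)%nat -> (j < N)%nat -> 0 <= w i j) -> conn w N -> 0 < k ->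
  sumN N glo <= sumN N d -> sumN N d <= sumN N ghi ->
  exists mu, forall i, (i < N)%nat -> d i - g i (mu i) - k * Lap w N mu i = 0.
Proof.
  intros Hgc Hgm Hglo Hghi Hs Hn Hc Hk Hf1 Hf2.
  destruct N as [|N'].
  { exists (fun _ => 0). intros; lia. }
  set (N := S N') in *.
  assert (HN : 0 < INR N) by (unfold N; apply lt_0_INR; lia).
  set (s := (sumN N d - sumN N glo) / INR N).
  set (s' := (sumN N ghi - sumN N d) / INR N).
  assert (Hs0 : 0 <= s) by (unfold s; apply Rdiv_le_0_compat; lra).
  assert (Hs0' : 0 <= s') by (unfold s'; apply Rdiv_le_0_compat; lra).
  destruct (lap_solve N w Hs Hn Hc (fun i => (d i - glo i - s) / k)) as [p Hp].
  { rewrite (sumN_ext _ _ (fun i => / k * (d i - glo i - s))) by (intros; unfold Rdiv; ring).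
    rewrite sumN_scal, !sumN_minus, sumN_const. unfold s. field_simplify; lra. }
  destruct (lap_solve N w Hs Hn Hc (fun i => (d i - ghi i + s') / k)) as [q Hq].
  { rewrite (sumN_ext _ _ (fun i => / k * (d i - ghi i + s'))) by (intros; unfold Rdiv; ring).
    rewrite sumN_scal, sumN_plus, !sumN_minus, sumN_const. unfold s'. field_simplify; lra. }
  destruct (bound_fin N (fun i => Rabs (p i) + Rabs (q i) + Rabs (vlo i) + Rabs (vhi i))) as [B [HB0 HB]].
  assert (HBi : forall i, (i < N)%nat -> Rabs (p i) <= B /\ Rabs (q i) <= B /\ Rabs (vlo i) <= B /\ Rabs (vhi i) <= B).
  { intros i Hi. specialize (HB i Hi). rewrite Rabs_pos_eq in HB.
    2:{ pose proof (Rabs_pos (p i)); pose proof (Rabs_pos (q i)); pose proof (Rabs_pos (vlo i)); pose proof (Rabs_pos (vhi i)); lra. }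
    pose proof (Rabs_pos (p i)); pose proof (Rabs_pos (q i)); pose proof (Rabs_pos (vlo i)); pose proof (Rabs_pos (vhi i)); lra. }
  set (a := fun i => - (3 * B) + p i).
  set (b := fun i => 3 * B + q i).
  set (F := fun x i => d i - g i (x i) - k * Lap w N x i).
  assert (Hab : forall i, (i < N)%nat -> a i <= b i).
  { intros i Hi. destruct (HBi i Hi) as (H1 & H2 & _). unfold a, b.
    apply Rabs_def2b in H1. apply Rabs_def2b in H2. lra. }
  assert (HFa : forall i, (i < N)%nat -> 0 <= F a i).
  { intros i Hi. unfold F, a. rewrite Lap_shift, Hp by auto. rewrite Hglo; auto.
    2:{ destruct (HBi i Hi) as (H1 & _ & H3 & _). apply Rabs_def2b in H1. apply Rabs_def2b in H3. lra. }
    field_simplify; lra. }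
  assert (HFb : forall i, (i < N)%nat -> F b i <= 0).
  { intros i Hi. unfold F, b. rewrite Lap_shift, Hq by auto. rewrite Hghi; auto.
    2:{ destruct (HBi i Hi) as (_ & H2 & _ & H4). apply Rabs_def2b in H2. apply Rabs_def2b in H4. lra. }
    field_simplify; lra. }
  set (c := fun i => k * sumN N (w i) + 1).
  assert (Hc0 : forall i, (i < N)%nat -> 1 <= c i).
  { intros i Hi. unfold c. assert (0 <= sumN N (w i)) by (apply sumN_nonneg; intros; apply Hn; auto). nra. }
  set (psi := fun i y => g i y + c i * y).
  set (Rr := fun x i => d i + k * sumN N (fun j => w i j * x j) + x i).
  assert (HFR : forall x i, F x i = Rr x i - psi i (x i)).
  { intros x i. unfold F, Rr, psi, c. rewrite Lap_expand. ring. }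
  assert (Hglob : forall i, (i < N)%nat -> forall x, glo i <= g i x <= ghi i).
  { intros i Hi x. split.
    - rewrite <- (Hglo i Hi (Rmin x (vlo i))) by apply Rmin_r. apply Hgm; auto. apply Rmin_l.
    - rewrite <- (Hghi i Hi (Rmax x (vhi i))) by apply Rmax_r. apply Hgm; auto. apply Rmax_l. }
  assert (Hsolex : forall i, (i < N)%nat -> forall r, exists y, psi i y = r).
  { intros i Hi r. pose proof (Hc0 i Hi).
    set (y1 := (r - ghi i) / c i - 1). set (y2 := (r - glo i) / c i + 1).
    assert (E1 : c i * y1 = r - ghi i - c i) by (unfold y1; field; lra).
    assert (E2 : c i * y2 = r - glo i + c i) by (unfold y2; field; lra).
    assert (Hy12 : y1 < y2).
    { destruct (Hglob i Hi 0). apply (Rmult_lt_reg_l (c i)); lra. }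
    destruct (IVT (fun y => psi i y - r) y1 y2) as [z [_ Hz]]; auto.
    - unfold psi. apply continuity_minus; [apply continuity_plus|apply continuity_const; intros ? ?; auto].
      apply Hgc; auto. apply continuity_mult. apply continuity_const; intros ? ?; auto. apply derivable_continuous, derivable_id.
    - unfold psi. destruct (Hglob i Hi y1). lra.
    - unfold psi. destruct (Hglob i Hi y2). lra.
    - exists z. lra. }
  assert (Hsolmon : forall i, (i < N)%nat -> forall y y', psi i y <= psi i y' -> y <= y').
  { intros i Hi y y' H. destruct (Rle_or_lt y y') as [|Hlt]; auto.
    pose proof (Hgm i Hi y' y ltac:(lra)). pose proof (Hc0 i Hi). unfold psi in H. nra. }
  set (sol := fun i r => epsilon (inhabits 0) (fun y => psi i y = r)).
  assert (Hsol : forall i, (i < N)%nat -> forall r, psi i (sol i r) = r).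
  { intros i Hi r. apply (epsilon_spec (inhabits 0) (fun y => psi i y = r)). auto. }
  assert (HRm : forall x y i, (i < N)%nat -> (forall j, (j < N)%nat -> x j <= y j) -> Rr x i <= Rr y i).
  { intros x y i Hi H. unfold Rr. pose proof (H i Hi).
    assert (sumN N (fun j => w i j * x j) <= sumN N (fun j => w i j * y j)).
    { apply sumN_le; intros j Hj. apply Rmult_le_compat_l; auto. }
    nra. }
  set (X := fix X n := match n with O => a | S m => fun i => sol i (Rr (X m) i) end).
  assert (Hmon : forall n, (forall i, (i < N)%nat -> X n i <= X (S n) i /\ X (S n) i <= b i)).
  { induction n as [|n IH]; intros i Hi.
    - simpl. split.
      + apply (Hsolmon i Hi). rewrite Hsol by auto. pose proof (HFa i Hi). rewrite HFR in H. lra.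
      + apply (Hsolmon i Hi). rewrite Hsol by auto. pose proof (HFb i Hi). rewrite HFR in H.
        pose proof (HRm a b i Hi Hab). lra.
    - change (X (S (S n)) i) with (sol i (Rr (X (S n)) i)).
      change (X (S n) i) with (sol i (Rr (X n) i)). split.
      + apply (Hsolmon i Hi). rewrite !Hsol by auto. apply HRm; auto. intros; apply IH; auto.
      + apply (Hsolmon i Hi). rewrite Hsol by auto. pose proof (HFb i Hi). rewrite HFR in H.
        pose proof (HRm (X (S n)) b i Hi (fun j Hj => proj2 (IH j Hj))). lra. }
  assert (Hlim : forall i, (i < N)%nat -> exists l, Un_cv (fun n => X n i) l).
  { intros i Hi. destruct (growing_cv (fun n => X n i)) as [l Hl].
    - intros n. apply Hmon; auto.
    - exists (b i). intros x [n ->]. destruct n. simpl. apply Hab; auto. apply Hmon; auto.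
    - exists l; auto. }
  set (mu := fun i => epsilon (inhabits 0) (fun l => Un_cv (fun n => X n i) l)).
  assert (Hmu : forall i, (i < N)%nat -> Un_cv (fun n => X n i) (mu i)).
  { intros i Hi. apply (epsilon_spec (inhabits 0) (fun l => Un_cv (fun n => X n i) l)). auto. }
  exists mu. intros i Hi. change (F mu i = 0). rewrite HFR.
  assert (HL1 : Un_cv (fun n => psi i (X (S n) i)) (psi i (mu i))).
  { apply continuity_seq. unfold psi. apply continuity_pt_plus. apply Hgc; auto.
    apply continuity_pt_mult. apply continuity_pt_const; intros ? ?; auto. apply derivable_continuous_pt, derivable_pt_id.
    apply (cv_S (fun n => X n i)), Hmu; auto. }
  assert (HL2 : Un_cv (fun n => Rr (X n) i) (Rr mu i)).
  { unfold Rr. apply CV_plus. apply CV_plus. apply cv_const. apply CV_mult. apply cv_const.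
    apply (cv_sumN N (fun n j => w i j * X n j) (fun j => w i j * mu j)). intros j Hj.
    apply CV_mult. apply cv_const. apply Hmu; auto. apply Hmu; auto. }
  assert (HL3 : Un_cv (fun n => psi i (X (S n) i)) (Rr mu i)).
  { intros e He. destruct (HL2 e He) as [M HM]. exists M. intros n Hn0.
    change (X (S n) i) with (sol i (Rr (X n) i)). rewrite Hsol by auto. apply HM; auto. }
  rewrite (UL_sequence _ _ _ HL1 HL3). ring.
Qed.


Lemma deriv_sumN n (u : nat -> R -> R) (u' : nat -> R) t :
  (forall i, (i < n)%nat -> derivable_pt_lim (u i) t (u' i)) ->
  derivable_pt_lim (fun s => sumN n (fun i => u i s)) t (sumN n u').
Proof.
  induction n; intros H; simpl.
  - apply derivable_pt_lim_const.
  - apply (derivable_pt_lim_plus (fun s => sumN n (fun i => u i s)) (u n)).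
    apply IHn; intros; apply H; lia. apply H; lia.
Qed.

Lemma deriv_sq (u : R -> R) c t l : derivable_pt_lim u t l ->
  derivable_pt_lim (fun s => (u s - c) * (u s - c)) t (2 * (u t - c) * l).
Proof.
  intros H. assert (H1 : derivable_pt_lim (fun s => u s - c) t l).
  { replace l with (l - 0) by ring. apply (derivable_pt_lim_minus u (fct_cte c)); auto. apply derivable_pt_lim_const. }
  pose proof (derivable_pt_lim_mult _ _ t l l H1 H1) as H2.
  replace (2 * (u t - c) * l) with (l * (u t - c) + (u t - c) * l) by ring. exact H2.
Qed.

Lemma quad_identity N w (x : nat -> R) :
  (forall i j, (i < N)%nat -> (j < N)%nat -> w i j = w j i) ->
  sumN N (fun i => x i * Lap w N x i) =
  / 2 * sumN N (fun i => sumN N (fun j => w i j * ((x i - x j) * (x i - x j)))).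
Proof.
  intros Hs.
  assert (E : sumN N (fun i => x i * Lap w N x i) =
    sumN N (fun i => sumN N (fun j => / 2 * (w i j * ((x i - x j) * (x i - x j))) +
                                       / 2 * (w i j * (x i * x i - x j * x j))))).
  { apply sumN_ext; intros i Hi. unfold Lap. rewrite <- sumN_scal. apply sumN_ext; intros; field. }
  rewrite E. rewrite (sumN_ext N _ (fun i => sumN N (fun j => / 2 * (w i j * ((x i - x j) * (x i - x j)))) +
        sumN N (fun j => / 2 * (w i j * (x i * x i - x j * x j))))) by (intros; apply sumN_plus).
  rewrite sumN_plus. rewrite (sumN_antisym N (fun i j => / 2 * (w i j * (x i * x i - x j * x j)))).
  2:{ intros i j Hi Hj. rewrite Hs by auto. ring. }
  rewrite <- sumN_scal. rewrite Rplus_0_r. apply sumN_ext; intros. rewrite sumN_scal. auto.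
Qed.

Lemma Lap_sum_zero N w x : (forall i j, (i < N)%nat -> (j < N)%nat -> w i j = w j i) ->
  sumN N (fun i => Lap w N x i) = 0.
Proof. intros Hs. unfold Lap. apply sumN_antisym. intros. rewrite Hs by auto. ring. Qed.

Lemma Lap_minus w N x y i : Lap w N x i - Lap w N y i = Lap w N (fun j => x j - y j) i.
Proof. unfold Lap. rewrite <- sumN_minus. apply sumN_ext; intros; ring. Qed.

Lemma path_close (E : nat -> nat -> Prop) u v :
  clos_refl_trans nat E u v -> forall eps, 0 < eps -> exists eta, 0 < eta /\
  forall x : nat -> R, (forall a b, E a b -> Rabs (x a - x b) < eta) -> Rabs (x v - x u) < eps.
Proof.
  induction 1 as [a b Hab| a | a b c _ IH1 _ IH2]; intros eps He.
  - exists eps. split; auto. intros x Hx. rewrite Rabs_minus_sym. auto.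
  - exists 1. split; [lra|]. intros. rewrite Rminus_diag, Rabs_R0. auto.
  - destruct (IH1 (eps/2) ltac:(lra)) as [e1 [He1 H1]]. destruct (IH2 (eps/2) ltac:(lra)) as [e2 [He2 H2]].
    exists (Rmin e1 e2). split. apply Rmin_glb_lt; auto. intros x Hx.
    assert (A1 : forall a b, E a b -> Rabs (x a - x b) < e1) by (intros; eapply Rlt_le_trans; [apply Hx; auto|apply Rmin_l]).
    assert (A2 : forall a b, E a b -> Rabs (x a - x b) < e2) by (intros; eapply Rlt_le_trans; [apply Hx; auto|apply Rmin_r]).
    specialize (H1 x A1). specialize (H2 x A2).
    replace (x c - x a) with ((x c - x b) + (x b - x a)) by ring.
    eapply Rle_lt_trans. apply Rabs_triang. lra.
Qed.

Lemma path_close_unif (E : nat -> nat -> Prop) n r :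
  (forall i, (i < n)%nat -> clos_refl_trans nat E r i) -> forall eps, 0 < eps -> exists eta, 0 < eta /\
  forall x : nat -> R, (forall a b, E a b -> Rabs (x a - x b) < eta) ->
    forall i, (i < n)%nat -> Rabs (x i - x r) < eps.
Proof.
  induction n; intros H eps He.
  - exists 1. split; [lra|]. intros; lia.
  - destruct (IHn (fun i Hi => H i ltac:(lia)) eps He) as [e1 [He1 H1]].
    destruct (path_close E r n (H n ltac:(lia)) eps He) as [e2 [He2 H2]].
    exists (Rmin e1 e2). split. apply Rmin_glb_lt; auto. intros x Hx i Hi.
    assert (A1 : forall a b, E a b -> Rabs (x a - x b) < e1) by (intros; eapply Rlt_le_trans; [apply Hx; auto|apply Rmin_l]).
    assert (A2 : forall a b, E a b -> Rabs (x a - x b) < e2) by (intros; eapply Rlt_le_trans; [apply Hx; auto|apply Rmin_r]).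
    destruct (Nat.eq_dec i n) as [->|]. apply H2; auto. apply H1; auto. lia.
Qed.

Lemma crt_conn (E : nat -> nat -> Prop) (S : nat -> Prop) a b :
  clos_refl_trans nat E a b -> S a -> ~ S b -> exists i j, E i j /\ S i /\ ~ S j.
Proof.
  induction 1 as [a b Hab| a | a b c _ IH1 _ IH2]; intros Sa Sb.
  - exists a, b; auto.
  - contradiction.
  - destruct (classic (S b)) as [Hb|Hb]. apply IH2; auto. apply IH1; auto.
Qed.

Lemma cv_sumN_infty n (u : nat -> R -> R) (l : nat -> R) :
  (forall i, (i < n)%nat -> cv_infty_fun (u i) (l i)) ->
  cv_infty_fun (fun t => sumN n (fun i => u i t)) (sumN n l).
Proof.
  induction n; intros H eps He; simpl.
  - exists 0. intros. rewrite Rminus_diag, Rabs_R0. auto.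
  - destruct (IHn (fun i Hi => H i ltac:(lia)) (eps/2) ltac:(lra)) as [T1 H1].
    destruct (H n ltac:(lia) (eps/2) ltac:(lra)) as [T2 H2].
    exists (Rmax T1 T2). intros t Ht.
    specialize (H1 t ltac:(pose proof (Rmax_l T1 T2); lra)). specialize (H2 t ltac:(pose proof (Rmax_r T1 T2); lra)).
    replace (sumN n (fun i => u i t) + u n t - (sumN n l + l n)) with
      ((sumN n (fun i => u i t) - sumN n l) + (u n t - l n)) by ring.
    eapply Rle_lt_trans. apply Rabs_triang. lra.
Qed.

Lemma Rinv_small r : 0 < r -> exists n : nat, / (INR n + 1) < r.
Proof.
  intros Hr. destruct (archimed_cor1 r Hr) as [n [Hn Hn0]]. exists n.
  eapply Rle_lt_trans; [|exact Hn]. apply Rinv_le_contravar. apply lt_0_INR; auto. lra.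
Qed.


Definition Fv N (d : nat -> R) (g : nat -> R -> R) w k (x : nat -> R) i :=
  d i - g i (x i) - k * Lap w N x i.
Definition Wv N (nu x : nat -> R) := sumN N (fun i => (x i - nu i) * (x i - nu i)).
Definition Dv N (g : nat -> R -> R) w k (nu x : nat -> R) :=
  sumN N (fun i => (x i - nu i) * (g i (x i) - g i (nu i))) +
  k / 2 * sumN N (fun i => sumN N (fun j => w i j *
     (((x i - nu i) - (x j - nu j)) * ((x i - nu i) - (x j - nu j))))).

Lemma W_deriv N d g w k (lam : R -> nat -> R) nu t :
  (forall i j, (i < N)%nat -> (j < N)%nat -> w i j = w j i) ->
  (forall i, (i < N)%nat -> derivable_pt_lim (fun s => lam s i) t (Fv N d g w k (lam t) i)) ->
  (forall i, (i < N)%nat -> Fv N d g w k nu i = 0) ->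
  derivable_pt_lim (fun s => Wv N nu (lam s)) t (-2 * Dv N g w k nu (lam t)).
Proof.
  intros Hs Hd Hnu. unfold Wv.
  replace (-2 * Dv N g w k nu (lam t)) with
    (sumN N (fun i => 2 * (lam t i - nu i) * Fv N d g w k (lam t) i)).
  { apply (deriv_sumN N (fun i s => (lam s i - nu i) * (lam s i - nu i))). intros i Hi.
    apply (deriv_sq (fun s => lam s i)). auto. }
  set (D := fun j => lam t j - nu j).
  rewrite (sumN_ext N _ (fun i => -2 * ((D i) * (g i (lam t i) - g i (nu i))) + (-2 * k) * (D i * Lap w N D i))).
  2:{ intros i Hi. rewrite <- (Rminus_0_r (Fv N d g w k (lam t) i)). rewrite <- (Hnu i Hi).
      unfold Fv. rewrite <- (Lap_minus w N (lam t) nu). unfold D. ring. }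
  rewrite sumN_plus, !sumN_scal, quad_identity by auto. unfold Dv, D. field.
Qed.

Lemma D_nonneg N g w k nu x :
  (forall i, (i < N)%nat -> forall x y, x <= y -> g i x <= g i y) ->
  (forall i j, (i < N)%nat -> (j < N)%nat -> 0 <= w i j) -> 0 < k ->
  0 <= sumN N (fun i => (x i - nu i) * (g i (x i) - g i (nu i))) /\
  0 <= sumN N (fun i => sumN N (fun j => w i j *
     (((x i - nu i) - (x j - nu j)) * ((x i - nu i) - (x j - nu j))))).
Proof.
  intros Hm Hw Hk. split.
  - apply sumN_nonneg; intros i Hi. destruct (Rle_or_lt (nu i) (x i)).
    + pose proof (Hm i Hi (nu i) (x i) H). apply Rmult_le_pos; lra.
    + pose proof (Hm i Hi (x i) (nu i) ltac:(lra)).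
      replace ((x i - nu i) * (g i (x i) - g i (nu i))) with ((nu i - x i) * (g i (nu i) - g i (x i))) by ring.
      apply Rmult_le_pos; lra.
  - apply sumN_nonneg; intros i Hi. apply sumN_nonneg; intros j Hj.
    apply Rmult_le_pos; auto. apply Rle_0_sqr.
Qed.

Lemma W_mono N d g w k (lam : R -> nat -> R) nu s t :
  (forall i, (i < N)%nat -> forall x y, x <= y -> g i x <= g i y) ->
  (forall i j, (i < N)%nat -> (j < N)%nat -> w i j = w j i) ->
  (forall i j, (i < N)%nat -> (j < N)%nat -> 0 <= w i j) -> 0 < k ->
  (forall i, (i < N)%nat -> forall t, 0 < t -> derivable_pt_lim (fun s => lam s i) t (Fv N d g w k (lam t) i)) ->
  (forall i, (i < N)%nat -> Fv N d g w k nu i = 0) ->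
  0 < s -> s <= t -> Wv N nu (lam t) <= Wv N nu (lam s).
Proof.
  intros Hm Hs Hw Hk Hd Hnu Hs0 Hst. destruct Hst as [Hlt|Heq]; [|rewrite Heq; lra].
  destruct (MVT_cor2 (fun s => Wv N nu (lam s)) (fun s => -2 * Dv N g w k nu (lam s)) s t Hlt) as [c [Hc1 Hc2]].
  { intros c Hc. apply (W_deriv N d g w k); auto. intros; apply Hd; auto; lra. }
  destruct (D_nonneg N g w k nu (lam c) Hm Hw Hk). unfold Dv in Hc1.
  assert (0 <= k / 2 * sumN N (fun i => sumN N (fun j => w i j *
     (((lam c i - nu i) - (lam c j - nu j)) * ((lam c i - nu i) - (lam c j - nu j)))))).
  { apply Rmult_le_pos; auto. lra. }
  nra.
Qed.


Lemma cont_at f x0 : continuity_pt f x0 -> forall eps, 0 < eps ->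
  exists alp, 0 < alp /\ forall x, Rabs (x - x0) < alp -> Rabs (f x - f x0) < eps.
Proof.
  intros H eps He. destruct (H eps He) as [alp [Ha Hx]]. exists alp. split; auto.
  intros x Hxa. destruct (Req_dec x x0) as [->|Hne].
  - rewrite Rminus_diag, Rabs_R0; auto.
  - apply (Hx x). split; auto. split; auto. exact I.
Qed.

Lemma sq_lt_abs x e : 0 < e -> x * x < e * e -> Rabs x < e.
Proof.
  intros He H. destruct (Rle_or_lt e (Rabs x)) as [Hc|]; auto.
  assert (Rabs x * Rabs x = x * x) by (rewrite <- Rabs_mult; apply Rabs_pos_eq; nra). nra.
Qed.

Lemma dyn_main N d g w k (lam : R -> nat -> R) mu :
  (0 < N)%nat ->
  (forall i, (i < N)%nat -> continuity (g i)) ->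
  (forall i, (i < N)%nat -> forall x y, x <= y -> g i x <= g i y) ->
  (forall i j, (i < N)%nat -> (j < N)%nat -> w i j = w j i) ->
  (forall i j, (i < N)%nat -> (j < N)%nat -> w i j = 0 \/ w i j = 1) ->
  (forall i, (i < N)%nat -> clos_refl_trans nat (fun a b => (a < N)%nat /\ (b < N)%nat /\ w a b = 1) 0%nat i) ->
  0 < k ->
  (forall i, (i < N)%nat -> forall t, 0 < t -> derivable_pt_lim (fun s => lam s i) t (Fv N d g w k (lam t) i)) ->
  (forall i, (i < N)%nat -> Fv N d g w k mu i = 0) ->
  exists nu, (forall i, (i < N)%nat -> Fv N d g w k nu i = 0) /\
    forall i, (i < N)%nat -> cv_infty_fun (fun t => lam t i) (nu i).
Proof.
  intros HN Hgc Hgm Hs H01 Hpath Hk Hd Hmu.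
  assert (Hw : forall i j, (i < N)%nat -> (j < N)%nat -> 0 <= w i j).
  { intros i j Hi Hj. destruct (H01 i j Hi Hj) as [->| ->]; lra. }
  set (D := fun t => Dv N g w k mu (lam t)).
  set (W := fun t => Wv N mu (lam t)).
  assert (HD0 : forall t, 0 <= sumN N (fun i => (lam t i - mu i) * (g i (lam t i) - g i (mu i))) /\
    0 <= sumN N (fun i => sumN N (fun j => w i j *
     (((lam t i - mu i) - (lam t j - mu j)) * ((lam t i - mu i) - (lam t j - mu j)))))).
  { intros t. apply (D_nonneg N g w k); auto. }
  assert (HDp : forall t, 0 <= D t).
  { intros t. destruct (HD0 t). unfold D, Dv. assert (0 <= k/2) by lra. nra. }
  assert (HW0 : forall t, 0 <= W t).
  { intros t. unfold W, Wv. apply sumN_nonneg; intros. apply Rle_0_sqr. }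
  assert (HWm : forall nu, (forall i, (i < N)%nat -> Fv N d g w k nu i = 0) ->
     forall s t, 0 < s -> s <= t -> Wv N nu (lam t) <= Wv N nu (lam s)).
  { intros nu Hnu s t Hs0 Hst. apply (W_mono N d g w k lam nu s t); auto. }
  assert (Hsmall : forall eps, 0 < eps -> forall T, exists t, T <= t /\ 1 <= t /\ D t < eps).
  { intros eps He T. apply NNPP. intros Hno.
    assert (Hge : forall t, T <= t -> 1 <= t -> eps <= D t).
    { intros t H1 H2. destruct (Rle_or_lt eps (D t)) as [|Hlt]; auto. exfalso. apply Hno. exists t; auto. }
    set (T' := Rmax T 1). pose proof (Rmax_l T 1). pose proof (Rmax_r T 1).
    set (t2 := T' + W T' / (2 * eps) + 1).
    assert (Ht2 : T' < t2).
    { unfold t2. assert (0 <= W T' / (2 * eps)) by (apply Rdiv_le_0_compat; auto; lra). lra. }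
    destruct (MVT_cor2 W (fun s => -2 * D s) T' t2 Ht2) as [c0 [Hc1 Hc2]].
    { intros c0 Hc0. unfold W, D. apply (W_deriv N d g w k lam mu c0 Hs); auto.
      intros; apply Hd; auto. unfold T' in *; lra. }
    pose proof (Hge c0 ltac:(unfold T' in *; lra) ltac:(unfold T' in *; lra)).
    pose proof (HW0 t2).
    assert (E : W T' / (2 * eps) * (2 * eps) = W T') by (field; lra).
    assert (t2 - T' = W T' / (2 * eps) + 1) by (unfold t2; ring).
    nra. }
  set (tn := fun n : nat => epsilon (inhabits 0) (fun t => INR n <= t /\ 1 <= t /\ D t < / (INR n + 1))).
  assert (Htn : forall n, INR n <= tn n /\ 1 <= tn n /\ D (tn n) < / (INR n + 1)).
  { intros n. apply (epsilon_spec (inhabits 0) (fun t => INR n <= t /\ 1 <= t /\ D t < / (INR n + 1))).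
    destruct (Hsmall (/ (INR n + 1))) with (T := INR n) as [t Ht].
    apply Rinv_0_lt_compat. pose proof (pos_INR n); lra. exists t; auto. }
  set (cn := fun n => lam (tn n) 0%nat - mu 0%nat).
  assert (Hcb : forall n, - (W 1 + 1) <= cn n <= W 1 + 1).
  { intros n. destruct (Htn n) as (_ & H1 & _).
    pose proof (HWm mu Hmu 1 (tn n) ltac:(lra) H1) as HW.
    assert (Hsq : cn n * cn n <= W (tn n)).
    { unfold cn, W, Wv. apply (sumN_term_le N (fun i => (lam (tn n) i - mu i) * (lam (tn n) i - mu i)) 0%nat); auto.
      intros; apply Rle_0_sqr. }
    change (W (tn n) <= W 1) in HW. pose proof (HW0 1). destruct (Rle_or_lt (Rabs (cn n)) 1) as [Ha|Ha].
    - apply Rabs_def2b in Ha. lra.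
    - assert (Rabs (cn n) * Rabs (cn n) = cn n * cn n) by (rewrite <- Rabs_mult; apply Rabs_pos_eq; nra).
      assert (Rabs (cn n) * 1 < Rabs (cn n) * Rabs (cn n)) by (apply Rmult_lt_compat_l; lra). assert (Rabs (cn n) <= W 1 + 1) by lra. apply Rabs_def2b. lra. }
  destruct (Bolzano_Weierstrass cn (fun x => - (W 1 + 1) <= x <= W 1 + 1) (compact_P3 _ _) Hcb) as [c Hc].
  set (E := fun a b => (a < N)%nat /\ (b < N)%nat /\ w a b = 1).
  assert (Hedge : forall t eta, 0 < eta -> D t < k * (eta * eta) / 2 ->
     forall a b, E a b -> Rabs ((lam t a - mu a) - (lam t b - mu b)) < eta).
  { intros t eta He HDt a b (Ha & Hb & Hab). apply sq_lt_abs; auto.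
    destruct (HD0 t) as [Q1 Q2].
    set (Q := sumN N (fun i => sumN N (fun j => w i j *
     (((lam t i - mu i) - (lam t j - mu j)) * ((lam t i - mu i) - (lam t j - mu j)))))) in *.
    assert (Hle : ((lam t a - mu a) - (lam t b - mu b)) * ((lam t a - mu a) - (lam t b - mu b)) <= Q).
    { unfold Q. eapply Rle_trans; [|apply (sumN_term_le N _ a); auto].
      2:{ intros; apply sumN_nonneg; intros; apply Rmult_le_pos; auto. apply Rle_0_sqr. }
      eapply Rle_trans; [|apply (sumN_term_le N _ b); auto].
      2:{ intros; apply Rmult_le_pos; auto. apply Rle_0_sqr. }
      simpl. rewrite Hab. lra. }
    unfold D, Dv in HDt. fold Q in HDt.
    assert (k / 2 * Q < k * (eta * eta) / 2) by lra.
    assert (Q < eta * eta) by (apply (Rmult_lt_reg_l (k/2)); lra). lra. }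
  assert (Hgood : forall eps r, 0 < eps -> 0 < r -> forall n0, exists n, (n0 <= n)%nat /\ D (tn n) < r /\
     forall i, (i < N)%nat -> Rabs (lam (tn n) i - (mu i + c)) < eps).
  { intros eps r He Hr n0.
    destruct (path_close_unif E N 0%nat Hpath (eps/2) ltac:(lra)) as [eta [Heta Hcl]].
    assert (Hkr : 0 < Rmin r (k * (eta * eta) / 2)).
    { apply Rmin_glb_lt; auto. assert (0 < eta * eta) by nra. nra. }
    destruct (Rinv_small _ Hkr) as [n1 Hn1].
    assert (Hnb : neighbourhood (disc c {| pos := eps / 2; cond_pos := ltac:(lra) |}) c).
    { exists {| pos := eps / 2; cond_pos := ltac:(lra) |}. intros x Hx; auto. }
    destruct (Hc _ (Nat.max n0 n1) Hnb) as [p [Hp Hpd]]. unfold disc in Hpd. simpl in Hpd.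
    exists p. 
    assert (HDp1 : D (tn p) < Rmin r (k * (eta * eta) / 2)).
    { destruct (Htn p) as (_ & _ & H3). eapply Rlt_trans; [exact H3|]. eapply Rle_lt_trans; [|exact Hn1].
      apply Rinv_le_contravar. pose proof (pos_INR n1); lra. apply Rplus_le_compat_r, le_INR. lia. }
    split; [lia|]. split. eapply Rlt_le_trans; [exact HDp1|apply Rmin_l].
    intros i Hi.
    assert (Hx := Hcl (fun j => lam (tn p) j - mu j)).
    specialize (Hx (Hedge (tn p) eta Heta ltac:(eapply Rlt_le_trans; [exact HDp1|apply Rmin_r])) i Hi).
    simpl in Hx. unfold cn in Hpd.
    replace (lam (tn p) i - (mu i + c)) with ((lam (tn p) i - mu i - (lam (tn p) 0%nat - mu 0%nat)) + (lam (tn p) 0%nat - mu 0%nat - c)) by ring.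
    eapply Rle_lt_trans. apply Rabs_triang. lra. }
  assert (HE : forall i, (i < N)%nat -> g i (mu i + c) = g i (mu i)).
  { intros i Hi. apply NNPP. intros Hne.
    set (gam := c * (g i (mu i + c) - g i (mu i))).
    assert (Hgam : 0 < gam).
    { unfold gam. destruct (Rtotal_order c 0) as [Hl|[He|Hg]].
      - pose proof (Hgm i Hi (mu i + c) (mu i) ltac:(lra)).
        assert (g i (mu i + c) < g i (mu i)) by (destruct H; auto; contradiction). nra.
      - subst. rewrite Rplus_0_r in Hne. contradiction.
      - pose proof (Hgm i Hi (mu i) (mu i + c) ltac:(lra)).
        assert (g i (mu i) < g i (mu i + c)) by (destruct H; auto; symmetry in H; contradiction). nra. }
    set (term := fun x => (x - mu i) * (g i x - g i (mu i))).
    assert (Hct : continuity_pt term (mu i + c)).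
    { unfold term. apply (continuity_pt_mult (fun x => x - mu i) (fun x => g i x - g i (mu i))).
      apply (continuity_pt_minus (fun x => x) (fun _ => mu i)). apply derivable_continuous_pt, derivable_pt_id.
      apply continuity_pt_const; intros ? ?; auto.
      apply (continuity_pt_minus (g i) (fun _ => g i (mu i))). apply Hgc; auto.
      apply continuity_pt_const; intros ? ?; auto. }
    destruct (cont_at _ _ Hct (gam / 2) ltac:(lra)) as [rho [Hrho Hcont]].
    destruct (Hgood rho (gam / 2) Hrho ltac:(lra) 0%nat) as [n [_ [HDn Hcl]]].
    specialize (Hcont (lam (tn n) i) ltac:(replace (lam (tn n) i - (mu i + c)) with (lam (tn n) i - (mu i + c)) by ring; apply Hcl; auto)).
    replace (term (mu i + c)) with gam in Hcont by (unfold term, gam; ring_simplify; auto).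
    apply Rabs_def2 in Hcont.
    destruct (HD0 (tn n)) as [Q1 Q2].
    assert (term (lam (tn n) i) <= sumN N (fun i => (lam (tn n) i - mu i) * (g i (lam (tn n) i) - g i (mu i)))).
    { apply (sumN_term_le N (fun i => (lam (tn n) i - mu i) * (g i (lam (tn n) i) - g i (mu i))) i); auto.
      intros j Hj. destruct (Rle_or_lt (mu j) (lam (tn n) j)) as [Hl|Hl].
      + pose proof (Hgm j Hj (mu j) (lam (tn n) j) Hl). apply Rmult_le_pos; lra.
      + pose proof (Hgm j Hj (lam (tn n) j) (mu j) ltac:(lra)).
        replace ((lam (tn n) j - mu j) * (g j (lam (tn n) j) - g j (mu j))) with
          ((mu j - lam (tn n) j) * (g j (mu j) - g j (lam (tn n) j))) by ring.
        apply Rmult_le_pos; lra. }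
    unfold D, Dv in HDn. assert (0 <= k / 2) by lra. nra. }
  set (nu := fun i => mu i + c).
  assert (Hnu : forall i, (i < N)%nat -> Fv N d g w k nu i = 0).
  { intros i Hi. rewrite <- (Hmu i Hi). unfold Fv, nu. rewrite HE by auto.
    f_equal. f_equal. unfold Lap. apply sumN_ext; intros; ring. }
  exists nu. split; auto.
  intros i Hi eps He.
  set (e2 := eps * eps). assert (He2 : 0 < e2) by (unfold e2; nra).
  assert (HN1 : 0 < INR N + 1) by (pose proof (pos_INR N); lra).
  set (del := Rmin 1 (e2 / (INR N + 1))).
  assert (Hdel : 0 < del) by (apply Rmin_glb_lt; [lra|apply Rdiv_lt_0_compat; lra]).
  destruct (Hgood del 1 Hdel ltac:(lra) 0%nat) as [n [_ [_ Hcl]]].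
  assert (HWn : Wv N nu (lam (tn n)) < e2).
  { unfold Wv. eapply Rle_lt_trans. apply (sumN_le N _ (fun _ => del * del)).
    { intros j Hj. specialize (Hcl j Hj). fold (nu j) in Hcl. apply Rabs_def2 in Hcl. nra. }
    rewrite sumN_const. assert (Hd1 : del <= 1) by apply Rmin_l. assert (Hd2 : del <= e2 / (INR N + 1)) by apply Rmin_r.
    pose proof (pos_INR N).
    assert (INR N * (del * del) <= INR N * del) by (apply Rmult_le_compat_l; nra).
    assert (INR N * del <= INR N * (e2 / (INR N + 1))) by (apply Rmult_le_compat_l; lra).
    assert (INR N * (e2 / (INR N + 1)) < e2).
    { apply (Rmult_lt_reg_r (INR N + 1)); auto. replace (INR N * (e2 / (INR N + 1)) * (INR N + 1)) with (INR N * e2) by (field; lra). nra. }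
    lra. }
  destruct (Htn n) as (_ & Ht1 & _).
  exists (tn n). intros t Ht.
  pose proof (HWm nu Hnu (tn n) t ltac:(lra) Ht) as HWt.
  apply sq_lt_abs; auto.
  eapply Rle_lt_trans; [|exact HWn]. eapply Rle_trans; [|exact HWt].
  unfold Wv. apply (sumN_term_le N (fun i => (lam t i - nu i) * (lam t i - nu i)) i); auto.
  intros; apply Rle_0_sqr.
Qed.


Lemma crt_mono (E1 E2 : nat -> nat -> Prop) a b :
  (forall x y, E1 x y -> E2 x y) -> clos_refl_trans nat E1 a b -> clos_refl_trans nat E2 a b.
Proof.
  intros H. induction 1. apply rt_step; auto. apply rt_refl. eapply rt_trans; eauto.
Qed.

Theorem theorem2
  (N : nat) (d xlo xhi : nat -> R) (f phi fd phid : nat -> R -> R)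
  (adj : nat -> nat -> bool) (k : R) (lam : R -> nat -> R) :
  (* nonempty closed intervals *)
  (forall i, (i < N)%nat -> xlo i <= xhi i) ->
  (* Assumption 1: C^1 with derivatives fd, phid *)
  (forall i, (i < N)%nat -> forall x, derivable_pt_lim (f i) x (fd i x)) ->
  (forall i, (i < N)%nat -> continuity (fd i)) ->
  (forall i, (i < N)%nat -> forall x, derivable_pt_lim (phi i) x (phid i x)) ->
  (forall i, (i < N)%nat -> continuity (phid i)) ->
  (forall i, (i < N)%nat -> strictly_convex_on (f i) (xlo i) (xhi i)) ->
  (forall i, (i < N)%nat -> convex_on (phi i) (xlo i) (xhi i)) ->
  (forall i, (i < N)%nat -> forall x, xlo i <= x <= xhi i -> phid i x < 1) ->
  (* Assumption 2 *)
  (forall i, (i < N)%nat -> forall x, xlo i <= x <= xhi i -> 0 < fd i x) ->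
  (* Assumption 3: undirected connected graph on {0,...,N-1} *)
  (forall i j, (i < N)%nat -> (j < N)%nat -> adj i j = adj j i) ->
  (forall i j, (i < N)%nat -> (j < N)%nat ->
     clos_refl_trans nat
       (fun a b => (a < N)%nat /\ (b < N)%nat /\ adj a b = true) i j) ->
  (* feasibility of (P) *)
  sumN N (fun i => xlo i - phi i (xlo i)) <= sumN N d ->
  sumN N d <= sumN N (fun i => xhi i - phi i (xhi i)) ->
  (* coupling gain *)
  0 < k ->
  (* lam is a solution on [0, +oo) of the distributed dynamics *)
  (forall i, (i < N)%nat ->
     limit1_in (fun s => lam s i) (fun s => 0 < s) (lam 0 i) 0) ->
  (forall i, (i < N)%nat -> forall t, 0 < t ->
     derivable_pt_lim (fun s => lam s i) t
       (d i - xhat (fd i) (phid i) (xlo i) (xhi i) (lam t i)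
            + phi i (xhat (fd i) (phid i) (xlo i) (xhi i) (lam t i))
            + k * sumN N (fun j => if adj j i then lam t j - lam t i else 0))) ->
  (* conclusion *)
  (exists L : nat -> R, forall i, (i < N)%nat -> cv_infty_fun (fun t => lam t i) (L i)) /\
  cv_infty_fun
    (fun t => sumN N (fun i =>
        xhat (fd i) (phid i) (xlo i) (xhi i) (lam t i)
        - phi i (xhat (fd i) (phid i) (xlo i) (xhi i) (lam t i))))
    (sumN N d).
Proof.
  intros Hlh Hf Hfc Hp Hpc Hsc Hcv Hp1 Hfp Hadj Hconn Hfe1 Hfe2 Hk Hinit Hder.
  destruct (Nat.eq_dec N 0) as [HN0|HN0].
  { subst N. split. exists (fun _ => 0). intros; lia.
    intros eps He. exists 0. intros. simpl. rewrite Rminus_diag, Rabs_R0. auto. }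
  assert (HN : (0 < N)%nat) by lia.
  set (g := fun i => gf (phi i) (fd i) (phid i) (xlo i) (xhi i)).
  set (w := fun i j => if adj j i then 1 else 0).
  assert (G : forall i, (i < N)%nat -> good (f i) (phi i) (fd i) (phid i) (xlo i) (xhi i)).
  { intros i Hi. repeat split; auto. }
  assert (Hgc : forall i, (i < N)%nat -> continuity (g i)).
  { intros i Hi. apply (g_cont (f i)); auto. }
  assert (Hgm : forall i, (i < N)%nat -> forall x y, x <= y -> g i x <= g i y).
  { intros i Hi x y Hxy. apply (g_mono (f i)); auto. }
  assert (Hs : forall i j, (i < N)%nat -> (j < N)%nat -> w i j = w j i).
  { intros i j Hi Hj. unfold w. rewrite Hadj by auto. auto. }
  assert (H01 : forall i j, (i < N)%nat -> (j < N)%nat -> w i j = 0 \/ w i j = 1).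
  { intros i j _ _. unfold w. destruct (adj j i); auto. }
  assert (Hwn : forall i j, (i < N)%nat -> (j < N)%nat -> 0 <= w i j).
  { intros i j Hi Hj. destruct (H01 i j Hi Hj) as [-> | ->]; lra. }
  assert (Hedge : forall a b, (a < N)%nat /\ (b < N)%nat /\ adj a b = true ->
                  (a < N)%nat /\ (b < N)%nat /\ w a b = 1).
  { intros a b (Ha & Hb & Hab). repeat split; auto. unfold w. rewrite Hadj, Hab by auto. auto. }
  assert (Hc : conn w N).
  { intros S [a [Ha Sa]] [b [Hb Sb]].
    destruct (crt_conn _ S a b (Hconn a b Ha Hb) Sa Sb) as (i & j & Hij & Si & Sj).
    destruct (Hedge i j Hij) as (Hi & Hj & Hw). exists i, j. repeat split; auto. lra. }
  assert (Hpath : forall i, (i < N)%nat ->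
    clos_refl_trans nat (fun a b => (a < N)%nat /\ (b < N)%nat /\ w a b = 1) 0%nat i).
  { intros i Hi. apply (crt_mono _ _ _ _ Hedge). apply Hconn; auto. }
  assert (Hd : forall i, (i < N)%nat -> forall t, 0 < t ->
    derivable_pt_lim (fun s => lam s i) t (Fv N d g w k (lam t) i)).
  { intros i Hi t Ht. specialize (Hder i Hi t Ht).
    replace (Fv N d g w k (lam t) i) with
      (d i - xhat (fd i) (phid i) (xlo i) (xhi i) (lam t i)
            + phi i (xhat (fd i) (phid i) (xlo i) (xhi i) (lam t i))
            + k * sumN N (fun j => if adj j i then lam t j - lam t i else 0)); auto.
    assert (Es : sumN N (fun j => if adj j i then lam t j - lam t i else 0) =
                 -1 * sumN N (fun j => w i j * (lam t i - lam t j))).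
    { rewrite <- sumN_scal. apply sumN_ext; intros j Hj. unfold w. destruct (adj j i); ring. }
    rewrite Es. unfold Fv, g, gf, Lap. ring. }
  destruct (equilibrium_exists N d (fun i => xlo i - phi i (xlo i)) (fun i => xhi i - phi i (xhi i))
     (fun i => vfun (fd i) (phid i) (xlo i)) (fun i => vfun (fd i) (phid i) (xhi i)) g w k
     Hgc Hgm) as [mu Hmu]; auto.
  { intros i Hi x Hx. apply g_low; auto. }
  { intros i Hi x Hx. apply (g_high (f i)); auto. }
  destruct (dyn_main N d g w k lam mu HN Hgc Hgm Hs H01 Hpath Hk Hd) as [nu [Hnu Hcv2]].
  { intros i Hi. unfold Fv. apply Hmu; auto. }
  split. exists nu; auto.
  assert (Hsum : sumN N (fun i => g i (nu i)) = sumN N d).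
  { assert (E : sumN N (Fv N d g w k nu) = 0).
    { rewrite <- (sumN_zero N). apply sumN_ext; auto. }
    unfold Fv in E. rewrite (sumN_ext N _ (fun i => d i - g i (nu i) + (- k) * Lap w N nu i)) in E
      by (intros; ring).
    rewrite sumN_plus, sumN_minus, sumN_scal, Lap_sum_zero in E by auto. lra. }
  rewrite <- Hsum.
  apply (cv_sumN_infty N (fun i t => g i (lam t i)) (fun i => g i (nu i))).
  intros i Hi eps He.
  destruct (cont_at (g i) (nu i) (Hgc i Hi (nu i)) eps He) as [alp [Ha Hcont]].
  destruct (Hcv2 i Hi alp Ha) as [T HT]. exists T. intros t Ht. apply Hcont, HT; auto.
Qed.
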